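(* Let $0\le t_d\le t_f$ be integers and let $f:\mathbb{F}_q^k\to\mathrm{Im}(f)$ be a locally $(2t_f,\lambda)$-bounded function such that there is a total order $\prec$ on $\mathrm{Im}(f)$ for which every set $B_f(u,2t_f)$, $u\in\mathbb{F}_q^k$, is a contiguous block (an interval) with respect to $\prec$. Suppose there exists a systematic $[n,k,2t_d+1]$ linear code over $\mathbb{F}_q$. Then $$r_f(k,t_d,t_f)\le n-k+N(\lambda,2(t_f-t_d)).$$ In particular, for $q=2$ and $\lambda=4$, $r_f(k,t_d,t_f)\le n-k+3(t_f-t_d)$.
   Context: $d(\cdot,\cdot)$ is Hamming distance. $B_f(u,\rho)=\{f(u'):u'\in\mathbb{F}_q^k,\ d(u,u')\le\rho\}$; $f$ is locally $(\rho,\lambda)$-bounded if $|B_f(u,\rho)|\le\lambda$ for all $u$. $N(\lambda,d)$ is the minimum length of a $q$-ary code with $\lambda$ codewords and minimum distance at least $d$ (with $N(\lambda,0)=0$). An $(f,t_d,t_f)$-FCC with redundancy $r$ is a systematic encoding $u\mapsto(u,p_u)\in\mathbb{F}_q^{k+r}$ whose images are at distance $\ge 2t_d+1$ for distinct messages and $\ge 2t_f+1$ for messages with different $f$-values; $r_f(k,t_d,t_f)$ is the minimum such $r$. *)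

(* Defs.v *)
From HB Require Import structures.
From mathcomp Require Import all_boot all_order all_algebra all_field.
From Stdlib Require Import ClassicalEpsilon.
Set Implicit Arguments. Unset Strict Implicit. Unset Printing Implicit Defensive.
Import GRing.Theory.
Local Open Scope ring_scope.

(* Classical minimum of a predicate on nat (0 if the predicate is never true). *)
Definition cmin (P : pred nat) : nat :=
  match excluded_middle_informative (exists n, P n) with
  | left H => ex_minn H
  | right _ => 0%N
  end.

Definition hdist (F : finFieldType) (m : nat) (x y : 'rV[F]_m) : nat :=
  #|[set i : 'I_m | x 0 i != y 0 i]|.

Definition fball (F : finFieldType) (k : nat) (T : finType)
    (f : 'rV[F]_k -> T) (u : 'rV[F]_k) (rho : nat) : {set T} :=
  [set f u' | u' in [set u' : 'rV[F]_k | (hdist u u' <= rho)%N]].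

Definition locally_bounded (F : finFieldType) (k : nat) (T : finType)
    (f : 'rV[F]_k -> T) (rho lam : nat) : Prop :=
  forall u, (#|fball f u rho| <= lam)%N.

Definition fimage (F : finFieldType) (k : nat) (T : finType)
    (f : 'rV[F]_k -> T) : {set T} := [set f u | u in [set: 'rV[F]_k]].

Definition total_order_on (T : finType) (S : {set T}) (le : rel T) : Prop :=
  {in S &, forall a b, le a b -> le b a -> a = b} /\
  {in S & &, forall a b c, le a b -> le b c -> le a c} /\
  {in S &, forall a b, le a b || le b a}.

Definition interval_in (T : finType) (S : {set T}) (le : rel T) (B : {set T}) :
  Prop :=
  forall a b c, a \in B -> b \in B -> c \in S -> le a c -> le c b -> c \in B.

Definition has_code (F : finFieldType) (lam d m : nat) : bool :=
  [exists C : {set 'rV[F]_m}, (#|C| == lam) &&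
     [forall x in C, forall y in C, (x != y) ==> (d <= hdist x y)%N]].

(* N(lam, d), with the convention N(lam, 0) = 0 *)
Definition Ncode (F : finFieldType) (lam d : nat) : nat :=
  if d == 0%N then 0%N else cmin (has_code F lam d).

Definition has_fcc (F : finFieldType) (k : nat) (T : finType)
    (f : 'rV[F]_k -> T) (td tf r : nat) : bool :=
  [exists p : {ffun 'rV[F]_k -> 'rV[F]_r},
     [forall u, forall v,
        ((u != v) ==> (2 * td + 1 <= hdist (row_mx u (p u)) (row_mx v (p v)))%N)
        && ((f u != f v) ==>
              (2 * tf + 1 <= hdist (row_mx u (p u)) (row_mx v (p v)))%N)]].

Definition r_f (F : finFieldType) (k : nat) (T : finType)
    (f : 'rV[F]_k -> T) (td tf : nat) : nat :=
  cmin (has_fcc f td tf).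

(* existence of a systematic [n, k, >= d] linear code over F: generator
   matrix [I_k | P] with P : 'M_(k, n-k), k <= n *)
Definition has_systematic_linear_code (F : finFieldType) (n k d : nat) : Prop :=
  (k <= n)%N /\
  exists P : 'M[F]_(k, n - k),
    forall u v : 'rV[F]_k, u != v ->
      (d <= hdist (row_mx u (u *m P)) (row_mx v (v *m P)))%N.

(* Main.v *)
Require Import Defs.
From mathcomp Require Import all_boot all_order all_algebra all_field.
From mathcomp Require Import zify.
From Stdlib Require Import ClassicalEpsilon.
Set Implicit Arguments. Unset Strict Implicit. Unset Printing Implicit Defensive.
Import GRing.Theory.
Local Open Scope ring_scope.

Lemma hdistE (F : finFieldType) (m : nat) (x y : 'rV[F]_m) :
  hdist x y = (\sum_(i < m) (x 0%R i != y 0%R i))%N.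
Proof.
rewrite /hdist -sum1_card big_mkcond /=; apply: eq_bigr => i _.
by rewrite inE; case: (x 0 i != y 0 i).
Qed.

Lemma hdist_row_mx (F : finFieldType) (m1 m2 : nat) (a a' : 'rV[F]_m1)
  (b b' : 'rV[F]_m2) :
  hdist (row_mx a b) (row_mx a' b') = (hdist a a' + hdist b b')%N.
Proof.
rewrite !hdistE big_split_ord /=; congr (_ + _)%N; apply: eq_bigr => i _;
by rewrite ?row_mxEl ?row_mxEr.
Qed.

Lemma hdist_xx (F : finFieldType) (m : nat) (x : 'rV[F]_m) : hdist x x = 0%N.
Proof. by rewrite hdistE big1 // => i _; rewrite eqxx. Qed.

Lemma hdist_const (F : finFieldType) (a b : F) :
  hdist (const_mx a : 'rV[F]_1) (const_mx b) = (a != b) :> nat.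
Proof. by rewrite hdistE big_ord1 !mxE. Qed.

Fixpoint rep (F : finFieldType) (a : nat) (x : 'rV[F]_a) (d : nat) : 'rV[F]_(d * a) :=
  match d return 'rV[F]_(d * a) with
  | 0 => 0
  | d'.+1 => row_mx x (rep x d')
  end.

Lemma hdist_rep (F : finFieldType) (a : nat) (x y : 'rV[F]_a) d :
  hdist (rep x d) (rep y d) = (d * hdist x y)%N.
Proof.
elim: d => [|d IH] /=; first by rewrite hdist_xx.
by rewrite hdist_row_mx IH mulSn.
Qed.

Fixpoint onehot (F : finFieldType) (i : nat) (l : nat) : 'rV[F]_l :=
  match l return 'rV[F]_l with
  | 0 => 0
  | l'.+1 => @row_mx F 1 1 l' (const_mx ((l' == i)%:R)) (onehot F i l')
  end.

Lemma hdist_constb (F : finFieldType) (b c : bool) :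
  hdist (const_mx (b%:R : F) : 'rV[F]_1) (const_mx c%:R) = (b != c) :> nat.
Proof.
rewrite hdist_const.
by case: b; case: c; rewrite ?eqxx ?oner_eq0 // eq_sym oner_eq0.
Qed.

Lemma onehotS (F : finFieldType) i l :
  onehot F i l.+1 = @row_mx F 1 1 l (const_mx ((l == i)%:R)) (onehot F i l).
Proof. reflexivity. Qed.

Lemma hdist_onehot (F : finFieldType) i j l : i != j ->
  hdist (onehot F i l) (onehot F j l) = ((i < l) + (j < l))%N.
Proof.
move=> ij; elim: l => [|l IH]; first by rewrite hdist_xx.
rewrite !onehotS (@hdist_row_mx F 1 l) hdist_constb IH !ltnS.
case: (ltngtP i l) => Hi; case: (ltngtP j l) => Hj //=.
all: try by subst; rewrite eqxx in ij.
all: try by rewrite ltnW.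
Qed.

Local Close Scope ring_scope.
Lemma eqP_sym (T : eqType) (x y : T) : x != y -> y != x.
Proof. by rewrite eq_sym. Qed.

Definition rk (F : finFieldType) k (T : finType) (f : 'rV[F]_k -> T) (le : rel T)
  (a : T) : nat := #|[set b in fimage f | le b a]|.

Lemma mod_neq x y l : (x < y)%N -> (y < x + l)%N -> x %% l != y %% l.
Proof.
move=> xy yl; rewrite -(subnKC (ltnW xy)).
rewrite -{1}[x]addn0 eqn_modDl mod0n modn_small; last lia.
lia.
Qed.

Lemma key_rank (F : finFieldType) (k tf lam : nat) (T : finType)
    (f : 'rV[F]_k -> T) (le : rel T) :
  locally_bounded f (2 * tf) lam ->
  total_order_on (fimage f) le ->
  (forall u, interval_in (fimage f) le (fball f u (2 * tf))) ->
  forall u v, f u != f v -> (hdist u v <= 2 * tf)%N ->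
  rk f le (f u) %% lam != rk f le (f v) %% lam.
Proof.
move=> lb [anti [trans tot]] intv u v fuv duv.
set S := fimage f; set B := fball f u (2 * tf).
have memS : forall w, f w \in S by move=> w; apply/imsetP; exists w; rewrite ?inE.
have BS : forall c, c \in B -> c \in S.
  by move=> c /imsetP [w _ ->].
have uB : f u \in B by apply/imsetP; exists u; rewrite // inE hdist_xx.
have vB : f v \in B by apply/imsetP; exists v; rewrite // inE.
have refl : forall a, a \in S -> le a a.
  by move=> a aS; have := tot a a aS aS; rewrite orbb.
have gen : forall a b, a \in B -> b \in B -> a != b -> le a b ->
    (rk f le a < rk f le b < rk f le a + lam)%N.
  move=> a b aB bB ab leab; have aS := BS _ aB; have bS := BS _ bB.
  apply/andP; split.
    apply: proper_card; apply/properP; split.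
      apply/subsetP => c; rewrite !inE => /andP [cS ca]; rewrite cS /=.
      exact: (trans c a b cS aS bS ca leab).
    exists b; first by rewrite inE bS refl.
    rewrite inE bS /=; apply/negP => ba.
    by move/eqP: ab; apply; apply: anti.
  have sub : [set c in S | le c b] \subset [set c in S | le c a] :|: (B :\ a).
    apply/subsetP => c; rewrite !inE => /andP [cS cb].
    case: (boolP (le c a)) => ca; first by rewrite cS.
    have ac : le a c by have := tot a c aS cS; rewrite (negbTE ca) orbF.
    apply/orP; right; rewrite (intv u a b c aB bB cS ac cb) andbT; apply/eqP => ca'.
    by move: ca; rewrite ca' refl.
  have h1 := subset_leq_card sub.
  have [h2 _] := leq_card_setU [set c in S | le c a] (B :\ a).
  have h3 := cardsD1 a B; rewrite aB add1n in h3.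
  have h4 := lb u; rewrite -/B in h4.
  rewrite /rk -/S.
  lia.
have [ab|ba] := orP (tot (f u) (f v) (memS u) (memS v)).
  by case/andP: (gen _ _ uB vB fuv ab) => h1 h2; apply: mod_neq.
rewrite eq_sym; case/andP: (gen _ _ vB uB (eqP_sym fuv) ba) => h1 h2.
by apply: mod_neq.
Qed.

Lemma fcc_construct (F : finFieldType) (k n td tf lam : nat) (T : finType)
    (f : 'rV[F]_k -> T) (le : rel T) (m : nat) (cw : nat -> 'rV[F]_m)
    (P : 'M[F]_(k, n - k)) :
  td <= tf ->
  locally_bounded f (2 * tf) lam ->
  total_order_on (fimage f) le ->
  (forall u, interval_in (fimage f) le (fball f u (2 * tf))) ->
  (forall u v : 'rV[F]_k, u != v ->
      2 * td + 1 <= hdist (row_mx u (u *m P)) (row_mx v (v *m P))) ->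
  (forall i j, i < lam -> j < lam -> i != j -> 2 * (tf - td) <= hdist (cw i) (cw j)) ->
  has_fcc f td tf (n - k + m).
Proof.
move=> tdf lb tot intv lin code.
apply/existsP; exists [ffun u => row_mx (u *m P) (cw (rk f le (f u) %% lam))].
apply/forallP => u; apply/forallP => v; rewrite !ffunE !hdist_row_mx.
have lam0 : 0 < lam.
  have := lb u; apply: leq_trans; rewrite card_gt0; apply/set0Pn.
  by exists (f u); apply/imsetP; exists u; rewrite // inE hdist_xx.
apply/andP; split; apply/implyP => uv.
  have := lin u v uv; rewrite hdist_row_mx addnA => h.
  by apply: leq_trans h (leq_addr _ _).
have uv' : u != v by apply: contraNneq uv => ->.
have := lin u v uv'; rewrite hdist_row_mx addnA.
case: (leqP (hdist u v) (2 * tf)) => duv.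
  have := code _ _ (ltn_pmod _ lam0) (ltn_pmod _ lam0) (key_rank lb tot intv uv duv).
  move: (hdist (cw _) (cw _)) (hdist u v + hdist (u *m P) (v *m P)) => c s' h1 h2.
  lia.
move=> _; rewrite addn1; apply: leq_trans duv _; rewrite -addnA; exact: leq_addr.
Qed.

Lemma cmin_le (P : pred nat) r : P r -> cmin P <= r.
Proof.
move=> Pr; rewrite /cmin; case: excluded_middle_informative => [H|[]]; last by exists r.
by case: ex_minnP => m _; apply.
Qed.

Lemma cmin_spec (P : pred nat) : (exists r, P r) -> P (cmin P).
Proof.
move=> ex; rewrite /cmin; case: excluded_middle_informative => [H|//].
by case: ex_minnP.
Qed.

Definition pat (F : finFieldType) (i : nat) : 'rV[F]_3 :=
  @row_mx F 1 1 2 (const_mx ((i == 1) || (i == 2))%:R%R)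
    (@row_mx F 1 1 1 (const_mx ((i == 1) || (i == 3))%:R%R)
                     (const_mx ((i == 2) || (i == 3))%:R%R)).

Lemma hdist_pat (F : finFieldType) i j : i < 4 -> j < 4 -> i != j ->
  2 <= hdist (pat F i) (pat F j).
Proof.
move=> il jl ij; rewrite /pat (@hdist_row_mx F 1 2) (@hdist_row_mx F 1 1) !hdist_constb.
move: i j il jl ij; do 4?case => //; do 4?case => //.
Qed.

Theorem theorem10 (F : finFieldType) (k n td tf lam : nat) (T : finType)
    (f : 'rV[F]_k -> T) (le : rel T) :
  (td <= tf)%N ->
  locally_bounded f (2 * tf) lam ->
  total_order_on (fimage f) le ->
  (forall u, interval_in (fimage f) le (fball f u (2 * tf))) ->
  has_systematic_linear_code F n k (2 * td + 1) ->
  (r_f f td tf <= n - k + Ncode F lam (2 * (tf - td)))%N /\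
  (#|F| = 2%N -> lam = 4%N -> (r_f f td tf <= n - k + 3 * (tf - td))%N).
Proof.
move=> tdf lb tot intv [kn [P lin]].
have key : forall m (cw : nat -> 'rV[F]_m),
    (forall i j, i < lam -> j < lam -> i != j -> 2 * (tf - td) <= hdist (cw i) (cw j)) ->
    r_f f td tf <= n - k + m.
  by move=> m cw H; apply: cmin_le; apply: fcc_construct tdf lb tot intv lin H.
split.
  rewrite /Ncode; case: eqP => [d0|d0].
    by apply: (key 0 (fun _ => 0%R)) => i j _ _ _; rewrite d0.
  set d := tf - td in d0 *.
  have dpos : 0 < d by lia.
  have ex : exists r, has_code F lam (2 * d) r.
    exists (d * lam); apply/existsP.
    exists [set rep (onehot F (val i) lam) d | i : 'I_lam]; apply/andP; split.
      rewrite card_imset ?card_ord //.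
      move=> i j eq; apply/eqP; apply/negPn/negP => ij.
      have ij' : (i : nat) != j by [].
      have := hdist_rep (onehot F i lam) (onehot F j lam) d.
      rewrite eq hdist_xx hdist_onehot // !ltn_ord; lia.
    apply/forallP => x; apply/implyP => /imsetP [i _ ->].
    apply/forallP => y; apply/implyP => /imsetP [j _ ->].
    apply/implyP => ne.
    have ij : (i : nat) != j by apply: contraNneq ne => /val_inj ->.
    by rewrite hdist_rep hdist_onehot // !ltn_ord mulnC.
  have := cmin_spec ex; set m0 := cmin _.
  move=> /existsP [C /andP [/eqP cC /forallP HC]].
  apply: (key m0 (fun i => nth 0%R (enum C) i)) => i j il jl ij.
  have sz : size (enum C) = lam by rewrite -cardE.
  have xi : nth 0%R (enum C) i \in C by rewrite -mem_enum mem_nth // sz.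
  have yj : nth 0%R (enum C) j \in C by rewrite -mem_enum mem_nth // sz.
  have := HC (nth 0%R (enum C) i); rewrite xi /= => /forallP /(_ (nth 0%R (enum C) j)).
  rewrite yj /= => /implyP; apply.
  by rewrite nth_uniq ?sz ?enum_uniq.
move=> _ l4; subst lam.
apply: leq_trans (key ((tf - td) * 3) (fun i => rep (pat F i) (tf - td)) _) _;
  last by rewrite mulnC.
move=> i j il jl ij; rewrite hdist_rep.
have := hdist_pat F il jl ij; move: (hdist _ _) => h hh; nia.
Qed.
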